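(* Let $\varsigma$ and $\omega$ be regular axially symmetric functions on the unit sphere $S^2$ (functions of $\theta\in[0,\pi]$) such that $$\mathcal M=\int_0^\pi\left(|\partial_\theta\varsigma|^2+4\varsigma+\frac{|\partial_\theta\omega|^2}{\eta^2}\right)\sin\theta\,d\theta,\qquad \eta=e^{\varsigma}\sin^2\theta,$$ is finite, and assume $\partial_\theta\omega=0$ at $\theta=0$ and $\theta=\pi$. Then $$\mathcal M\ge 8\big(\ln(2|J|)+1\big),\qquad\text{where } J=\tfrac18\big(\omega(\pi)-\omega(0)\big).$$ *)

(* Defs.v *)
From Stdlib Require Import Reals.
From Coquelicot Require Import Coquelicot.
Open Scope R_scope.

Definition eta (sigma : R -> R) (th : R) : R := exp (sigma th) * (sin th) ^ 2.

Definition M_integrand (sigma omega : R -> R) (th : R) : R :=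
  ((Derive sigma th) ^ 2 + 4 * sigma th
   + (Derive omega th) ^ 2 / (eta sigma th) ^ 2) * sin th.

(* "M is finite and equals m": the improper Riemann integral over (0, pi)
   of the integrand converges to m. *)
Definition M_value (sigma omega : R -> R) (m : R) : Prop :=
  is_RInt_gen (M_integrand sigma omega) (at_right 0) (at_left PI) m.

Definition regular_on_0pi (f : R -> R) : Prop :=
  forall th, 0 <= th <= PI -> ex_derive f th /\ continuous (Derive f) th.

Definition ang_mom (omega : R -> R) : R := (omega PI - omega 0) / 8.

(* Main.v *)
Require Import Defs.
From Stdlib Require Import Reals Lra Psatz.
From Coquelicot Require Import Coquelicot.
Open Scope R_scope.

Lemma geo (W V y x' y' : R) : 0 < y ->
  ((W*x' + y*y')/(W^2+y^2) - (V*x'+y*y')/(V^2+y^2))^2 <= (x'^2+y'^2)/y^2.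
Proof.
intros Hy.
set (A := W^2+y^2). set (B := V^2+y^2).
assert (HA : 0 < A) by (unfold A; nra).
assert (HB : 0 < B) by (unfold B; nra).
set (u1 := W*B - V*A). set (u2 := y*(B-A)).
set (N := u1*x' + u2*y').
assert (E : (W*x' + y*y')/A - (V*x'+y*y')/B = N/(A*B)).
{ unfold N, u1, u2; field; lra. }
rewrite E.
assert (Hu : u1^2+u2^2 = (W-V)^2*A*B) by (unfold u1,u2,A,B; ring).
assert (CS : N^2 <= (W-V)^2*A*B*(x'^2+y'^2)).
{ unfold N. rewrite <- Hu.
  assert (Id : (u1^2+u2^2)*(x'^2+y'^2) - (u1*x'+u2*y')^2 = (u1*y'-u2*x')^2) by ring.
  assert (0 <= (u1*y'-u2*x')^2) by apply pow2_ge_0. lra. }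
assert (Hk : (W-V)^2*y^2 <= A*B).
{ unfold A, B.
  assert (Id : (W^2+y^2)*(V^2+y^2) - (W-V)^2*y^2 = (W*V+y^2)^2) by ring.
  assert (0 <= (W*V+y^2)^2) by apply pow2_ge_0. lra. }
assert (HAB : 0 < A*B) by nra.
assert (Hnum : N^2*y^2 <= (x'^2+y'^2)*(A*B)^2).
{ assert (0 <= x'^2+y'^2) by nra.
  assert (N^2*y^2 <= (W-V)^2*A*B*(x'^2+y'^2)*y^2) by (apply Rmult_le_compat_r; nra).
  assert ((W-V)^2*y^2*(A*B*(x'^2+y'^2)) <= A*B*(A*B*(x'^2+y'^2))) by (apply Rmult_le_compat_r; nra).
  nra. }
assert (Ediff : (N/(A*B))^2 - (x'^2+y'^2)/y^2 = (N^2*y^2 - (x'^2+y'^2)*(A*B)^2)/((A*B)^2*y^2)).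
{ field; split; lra. }
assert (0 < (A*B)^2*y^2) by (apply Rmult_lt_0_compat; apply pow_lt; lra).
assert ((N^2*y^2 - (x'^2+y'^2)*(A*B)^2)/((A*B)^2*y^2) <= 0).
{ assert (0 < /((A*B)^2*y^2)) by (apply Rinv_0_lt_compat; lra). unfold Rdiv; nra. }
lra.
Qed.

Lemma pw (s c E S S' w W V : R) : 0 < s -> s^2 + c^2 = 1 -> 0 < E ->
  (S'^2 + 4*S + w^2/(E*s^2)^2)*s -
  (4*(W*w + (E*s^2)*(S'*E*s^2 + E*2*c*s))/(W^2+(E*s^2)^2)
   - 4*(V*w + (E*s^2)*(S'*E*s^2 + E*2*c*s))/(V^2+(E*s^2)^2)
   - 4*s/(1+c) - 4*s/(1-c) + 4*s*(1+S) - 4*c*S') >= 0.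
Proof.
intros Hs Hsc HE.
assert (Hc1 : 0 < 1 + c) by nra.
assert (Hc2 : 0 < 1 - c) by nra.
set (y := E*s^2). set (y' := S'*E*s^2 + E*2*c*s).
assert (Hy : 0 < y) by (unfold y; apply Rmult_lt_0_compat; [lra| apply pow_lt; lra]).
set (t := (W*w + y*y')/(W^2+y^2) - (V*w+y*y')/(V^2+y^2)).
assert (Ht : t^2 <= (w^2+y'^2)/y^2) by (apply geo; exact Hy).
assert (HA : 0 < W^2+y^2) by nra.
assert (HB : 0 < V^2+y^2) by nra.
assert (E1 : 4*(W*w + y*y')/(W^2+y^2) - 4*(V*w + y*y')/(V^2+y^2) = 4*t)
  by (unfold t; field; lra).
assert (E2 : 4*s/(1+c) + 4*s/(1-c) = 8/s).
{ replace (4*s/(1+c) + 4*s/(1-c)) with (8*s/((1+c)*(1-c))) by (field; lra).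
  replace ((1+c)*(1-c)) with (s^2) by nra. field; lra. }
assert (E3 : y'^2/y^2 = (S' + 2*c/s)^2) by (unfold y, y'; field; lra).
assert (E4 : (S'^2 + 4*S + w^2/y^2)*s - (4*t - 4*s/(1+c) - 4*s/(1-c) + 4*s*(1+S) - 4*c*S')
   = s*((w^2+y'^2)/y^2) + 4/s - 4*t).
{ assert (E5 : s*((w^2+y'^2)/y^2) = s*(w^2/y^2) + s*(S' + 2*c/s)^2).
  { rewrite <- E3. field. lra. }
  rewrite E5.
  replace (4*t - 4*s/(1+c) - 4*s/(1-c) + 4*s*(1+S) - 4*c*S') with
    (4*t - (4*s/(1+c) + 4*s/(1-c)) + 4*s*(1+S) - 4*c*S') by ring.
  rewrite E2.
  assert (D : (S'^2 + 4*S + w^2/y^2)*s - (4*t - 8/s + 4*s*(1+S) - 4*c*S')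
     - (s*(w^2/y^2) + s*(S' + 2*c/s)^2 + 4/s - 4*t) = 4*(1 - (s^2+c^2))/s) by (field; lra).
  rewrite Hsc in D. replace (4*(1-1)/s) with 0 in D by (field; lra). lra. }
replace (4 * (W * w + y * y') / (W ^ 2 + y ^ 2) - 4 * (V * w + y * y') / (V ^ 2 + y ^ 2) -
  4 * s / (1 + c) - 4 * s / (1 - c) + 4 * s * (1 + S) - 4 * c * S')
  with (4*t - 4*s/(1+c) - 4*s/(1-c) + 4*s*(1+S) - 4*c*S') by (rewrite <- E1; ring).
rewrite E4.
assert (s*((w^2+y'^2)/y^2) >= s*t^2) by (apply Rle_ge, Rmult_le_compat_l; lra).
assert (E6 : s*t^2 + 4/s - 4*t = (s*t-2)^2/s) by (field; lra).
assert (0 <= (s*t-2)^2/s) by (apply Rcomplements.Rdiv_le_0_compat; [apply pow2_ge_0|lra]).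
lra.
Qed.

Definition Phi (sigma omega : R -> R) (a b : R) (th : R) : R :=
  2 * ln ((omega th - a)^2 + (eta sigma th)^2) - 2 * ln ((omega th - b)^2 + (eta sigma th)^2)
  + 4 * ln (1 + cos th) - 4 * ln (1 - cos th) - 4 * cos th * (1 + sigma th).

Definition Phid (sigma omega : R -> R) (a b : R) (th : R) : R :=
  let s := sin th in let c := cos th in let E := exp (sigma th) in
  let S' := Derive sigma th in let w := Derive omega th in
  4*((omega th - a)*w + (E*s^2)*(S'*E*s^2 + E*2*c*s))/((omega th - a)^2+(E*s^2)^2)
   - 4*((omega th - b)*w + (E*s^2)*(S'*E*s^2 + E*2*c*s))/((omega th - b)^2+(E*s^2)^2)
   - 4*s/(1+c) - 4*s/(1-c) + 4*s*(1+sigma th) - 4*c*S'.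

Lemma sin_cos_bounds th : 0 < th < PI -> 0 < sin th /\ 0 < 1 + cos th /\ 0 < 1 - cos th.
Proof.
intros H. assert (Hs : 0 < sin th) by (apply sin_gt_0; lra).
pose proof (sin2_cos2 th) as E. unfold Rsqr in E. split; [lra|]. split; nra.
Qed.

Lemma Phi_derive (sigma omega : R -> R) (a b th : R) : 0 < th < PI -> ex_derive sigma th -> ex_derive omega th ->
  is_derive (Phi sigma omega a b) th (Phid sigma omega a b th).
Proof.
intros Hth Hs Ho. destruct (sin_cos_bounds th Hth) as [H1 [H2 H3]].
assert (HE : 0 < exp (sigma th)) by apply exp_pos.
assert (H : 0 < exp (sigma th) * (sin th * (sin th * 1))) by (apply Rmult_lt_0_compat; nra).
unfold Phi, eta, Phid. auto_derive; repeat split; auto.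
1-2: rewrite !Rmult_1_r; apply Rplus_le_lt_0_compat; [apply Rle_0_sqr | rewrite Rmult_1_r in H; apply Rmult_lt_0_compat; assumption].
change (Derive (fun x => sigma x) th) with (Derive sigma th).
change (Derive (fun x => omega x) th) with (Derive omega th).
assert (P : 0 < exp (sigma th) * sin th ^ 2) by (apply Rmult_lt_0_compat; [lra| apply pow_lt; lra]).
assert (0 < (omega th - a)^2 + (exp (sigma th) * sin th ^ 2)^2) by (apply Rplus_le_lt_0_compat; [apply pow2_ge_0| apply pow_lt; lra]).
assert (0 < (omega th - b)^2 + (exp (sigma th) * sin th ^ 2)^2) by (apply Rplus_le_lt_0_compat; [apply pow2_ge_0| apply pow_lt; lra]).
field. repeat split; try lra.
Qed.

Lemma cM (f g : R -> R) x : continuous f x -> continuous g x -> continuous (fun y => f y * g y) x.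
Proof. intros; exact (continuous_mult f g x H H0). Qed.
Lemma cP (f g : R -> R) x : continuous f x -> continuous g x -> continuous (fun y => f y + g y) x.
Proof. intros; exact (continuous_plus f g x H H0). Qed.
Lemma cK (c : R) x : continuous (fun _ : R => c) x.
Proof. exact (continuous_const c x). Qed.
Lemma cSq (f : R -> R) x : continuous f x -> continuous (fun y => f y ^ 2) x.
Proof. intros H. exact (cM _ _ x H (cM _ _ x H (cK 1 x))). Qed.
Lemma cInv (f : R -> R) x : continuous f x -> f x <> 0 -> continuous (fun y => / f y) x.
Proof. intros; apply continuous_Rinv_comp; auto. Qed.
Lemma cLn (f : R -> R) x : continuous f x -> 0 < f x -> continuous (fun y => ln (f y)) x.
Proof. intros; apply (continuous_comp f ln x H (continuous_ln _ H0)). Qed.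

Lemma cD (f : R -> R) x : ex_derive f x -> continuous f x.
Proof. intros H. exact (ex_derive_continuous (K:=R_AbsRing) (V:=R_NormedModule) f x H). Qed.

Lemma I_cont (sigma omega : R -> R) th : regular_on_0pi sigma -> regular_on_0pi omega ->
  0 < th < PI -> continuous (M_integrand sigma omega) th.
Proof.
intros Rs Ro Hth.
destruct (Rs th ltac:(lra)) as [Ds Cs]. destruct (Ro th ltac:(lra)) as [Do Co].
destruct (sin_cos_bounds th Hth) as [H1 [H2 H3]].
unfold M_integrand, eta.
apply cM; [| apply continuous_sin].
apply cP; [apply cP|].
- apply cSq; exact Cs.
- apply cM; [apply cK | apply cD; exact Ds].
- apply cM; [apply cSq; exact Co|].
  apply cInv.
  + apply cSq. apply cM; [apply continuous_exp_comp, cD; exact Ds|].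
    apply cSq, continuous_sin.
  + apply pow_nonzero. apply Rgt_not_eq. apply Rmult_lt_0_compat; [apply exp_pos| apply pow_lt; lra].
Qed.

Lemma interval_bound (sigma omega : R -> R) (a b al be v : R) :
  regular_on_0pi sigma -> regular_on_0pi omega -> 0 < al -> al < be -> be < PI ->
  is_RInt (M_integrand sigma omega) al be v ->
  Phi sigma omega a b be - Phi sigma omega a b al <= v.
Proof.
intros Rs Ro Hal Hab Hbe Hv.
set (I := M_integrand sigma omega).
set (K := fun x => RInt I al x - Phi sigma omega a b x).
assert (derK : forall x, 0 < x < PI -> is_derive K x (I x - Phid sigma omega a b x)).
{ intros x Hx.
  destruct (Rs x ltac:(lra)) as [Ds _]. destruct (Ro x ltac:(lra)) as [Do _].
  assert (D1 : is_derive (fun y => RInt I al y) x (I x)).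
  { apply (is_derive_RInt I (fun y => RInt I al y) al x).
    - assert (Heps : 0 < Rmin x (PI - x)) by (apply Rmin_glb_lt; lra).
      exists (mkposreal _ Heps). intros y Hy.
      change (Rabs (y - x) < Rmin x (PI - x)) in Hy.
      assert (Hy2 : 0 < y < PI).
      { pose proof (Rmin_l x (PI - x)). pose proof (Rmin_r x (PI - x)).
        apply Rabs_lt_between' in Hy. lra. }
      apply (RInt_correct (V:=R_CompleteNormedModule)), (ex_RInt_continuous (V:=R_CompleteNormedModule)).
      intros z Hz. apply I_cont; auto.
      pose proof (Rmin_l al y). pose proof (Rmin_r al y).
      pose proof (Rmax_l al y). pose proof (Rmax_r al y).
      destruct (Rle_dec al y).
      + rewrite Rmin_left in Hz by lra; rewrite Rmax_right in Hz by lra; lra.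
      + rewrite Rmin_right in Hz by lra; rewrite Rmax_left in Hz by lra; lra.
    - apply I_cont; auto. }
  exact (is_derive_minus _ _ x _ _ D1 (Phi_derive sigma omega a b x Hx Ds Do)). }
destruct (MVT_gen K al be (fun x => I x - Phid sigma omega a b x)) as [c [Hc Heq]].
- intros x Hx. rewrite Rmin_left in Hx by lra. rewrite Rmax_right in Hx by lra.
  apply derK. lra.
- intros x Hx. rewrite Rmin_left in Hx by lra. rewrite Rmax_right in Hx by lra.
  apply continuity_pt_filterlim. apply cD. eexists. apply derK. lra.
- rewrite Rmin_left in Hc by lra. rewrite Rmax_right in Hc by lra.
  assert (Hc' : 0 < c < PI) by lra.
  destruct (sin_cos_bounds c Hc') as [H1 _].
  assert (Hsc : sin c ^ 2 + cos c ^ 2 = 1) by (pose proof (sin2_cos2 c); unfold Rsqr in *; lra).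
  pose proof (pw (sin c) (cos c) (exp (sigma c)) (sigma c) (Derive sigma c) (Derive omega c)
    (omega c - a) (omega c - b) H1 Hsc (exp_pos _)) as Hp.
  assert (Hpos : I c - Phid sigma omega a b c >= 0).
  { unfold I, M_integrand, eta, Phid. cbv zeta. exact Hp. }
  unfold K in Heq. rewrite RInt_point in Heq. replace (RInt I al be) with v in Heq by (symmetry; apply is_RInt_unique; exact Hv).
  change (zero : R) with 0 in Heq.
  assert (0 <= (I c - Phid sigma omega a b c) * (be - al)) by (apply Rmult_le_pos; lra).
  lra.
Qed.

Definition g1 (sigma : R -> R) (al : R) : R := -4*sigma al - 8*ln(1+cos al) + 4*cos al*(1+sigma al).
Definition g2 (sigma : R -> R) (be : R) : R := -4*sigma be - 8*ln(1-cos be) - 4*cos be*(1+sigma be).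
Definition Gf (sigma omega : R -> R) (al be : R) : R :=
  4*ln((omega be - omega al)^2) + g2 sigma be + g1 sigma al.

Lemma ln_eta2 (sigma : R -> R) th : 0 < th < PI ->
  ln ((eta sigma th)^2) = 2*sigma th + 2*ln(1-cos th) + 2*ln(1+cos th).
Proof.
intros Hth. destruct (sin_cos_bounds th Hth) as [H1 [H2 H3]].
assert (Hs : sin th ^ 2 = (1 - cos th)*(1+cos th)) by (pose proof (sin2_cos2 th); unfold Rsqr in *; nra).
replace ((eta sigma th)^2) with ((exp (sigma th) * exp (sigma th)) * (((1-cos th)*(1+cos th))*((1-cos th)*(1+cos th))))
  by (unfold eta; rewrite Hs; ring).
pose proof (exp_pos (sigma th)).
rewrite ln_mult by (try apply Rmult_lt_0_compat; try apply Rmult_lt_0_compat; lra).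
rewrite ln_mult by lra.
rewrite ln_mult by (apply Rmult_lt_0_compat; lra).
rewrite ln_mult by lra.
rewrite ln_exp. ring.
Qed.

Lemma Phi_diff_bound (sigma omega : R -> R) (al be : R) :
  0 < al < PI -> 0 < be < PI -> omega be - omega al <> 0 ->
  Gf sigma omega al be <= Phi sigma omega (omega al) (omega be) be - Phi sigma omega (omega al) (omega be) al.
Proof.
intros Hal Hbe HD.
unfold Phi, Gf, g1, g2.
replace ((omega be - omega be)^2 + (eta sigma be)^2) with ((eta sigma be)^2) by ring.
replace ((omega al - omega al)^2 + (eta sigma al)^2) with ((eta sigma al)^2) by ring.
replace ((omega al - omega be)^2) with ((omega be - omega al)^2) by ring.
rewrite (ln_eta2 sigma be Hbe), (ln_eta2 sigma al Hal).
assert (HD2 : 0 < (omega be - omega al)^2).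
{ rewrite <- Rsqr_pow2. apply Rsqr_pos_lt. exact HD. }
assert (L1 : ln ((omega be - omega al)^2) <= ln ((omega be - omega al)^2 + (eta sigma be)^2))
  by (apply ln_le; [exact HD2| pose proof (pow2_ge_0 (eta sigma be)); lra]).
assert (L2 : ln ((omega be - omega al)^2) <= ln ((omega be - omega al)^2 + (eta sigma al)^2))
  by (apply ln_le; [exact HD2| pose proof (pow2_ge_0 (eta sigma al)); lra]).
lra.
Qed.

Lemma cMi (f g : R -> R) x : continuous f x -> continuous g x -> continuous (fun y => f y - g y) x.
Proof. intros; exact (continuous_minus f g x H H0). Qed.

Notation FF := (filter_prod (at_right 0) (at_left PI)).

Lemma lim_fst (f : R -> R) : continuous f 0 ->
  filterlim (fun p : R * R => f (fst p)) FF (locally (f 0)).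
Proof.
intros H. eapply filterlim_comp.
- apply filterlim_fst.
- eapply filterlim_filter_le_1; [apply filter_le_within | exact H].
Qed.

Lemma lim_snd (f : R -> R) : continuous f PI ->
  filterlim (fun p : R * R => f (snd p)) FF (locally (f PI)).
Proof.
intros H. eapply filterlim_comp.
- apply filterlim_snd.
- eapply filterlim_filter_le_1; [apply filter_le_within | exact H].
Qed.

Lemma lim_plus (f g : R * R -> R) x y : filterlim f FF (locally x) -> filterlim g FF (locally y) ->
  filterlim (fun p => f p + g p) FF (locally (x + y)).
Proof.
intros Hf Hg. exact (filterlim_comp_2 f g (fun u v => plus u v) Hf Hg (filterlim_plus x y)).
Qed.

Lemma lim_minus (f g : R * R -> R) x y : filterlim f FF (locally x) -> filterlim g FF (locally y) ->
  filterlim (fun p => f p - g p) FF (locally (x - y)).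
Proof.
intros Hf Hg.
assert (Hg' : filterlim (fun p => - g p) FF (locally (- y))).
{ exact (filterlim_comp _ _ _ g (fun u => opp u) FF _ _ Hg (filterlim_opp y)). }
exact (lim_plus f (fun p => - g p) x (-y) Hf Hg').
Qed.

Lemma lim_cont (f : R * R -> R) (g : R -> R) x : filterlim f FF (locally x) -> continuous g x ->
  filterlim (fun p => g (f p)) FF (locally (g x)).
Proof. intros Hf Hg. exact (filterlim_comp _ _ _ f g FF _ _ Hf Hg). Qed.

Lemma g1_cont (sigma : R -> R) : ex_derive sigma 0 -> continuous (g1 sigma) 0.
Proof.
intros Ds. unfold g1.
assert (Cs := cD _ _ Ds).
apply cP; [apply cMi|].
- apply cM; [apply cK | exact Cs].
- apply cM; [apply cK|]. apply cLn; [apply cP; [apply cK| apply continuous_cos]|].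
  rewrite cos_0; lra.
- apply cM; [apply cM; [apply cK| apply continuous_cos]| apply cP; [apply cK| exact Cs]].
Qed.

Lemma g2_cont (sigma : R -> R) : ex_derive sigma PI -> continuous (g2 sigma) PI.
Proof.
intros Ds. unfold g2.
assert (Cs := cD _ _ Ds).
apply cMi; [apply cMi|].
- apply cM; [apply cK | exact Cs].
- apply cM; [apply cK|]. apply cLn; [apply cMi; [apply cK| apply continuous_cos]|].
  rewrite cos_PI; lra.
- apply cM; [apply cM; [apply cK| apply continuous_cos]| apply cP; [apply cK| exact Cs]].
Qed.

Theorem lemma3 (sigma omega : R -> R) (M : R) :
  regular_on_0pi sigma -> regular_on_0pi omega ->
  M_value sigma omega M ->
  Derive omega 0 = 0 -> Derive omega PI = 0 ->
  ang_mom omega <> 0 ->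
  M >= 8 * (ln (2 * Rabs (ang_mom omega)) + 1).
Proof.
intros Rs Ro HM _ _ HJ.
pose proof PI_RGT_0 as HPI.
destruct (Rs 0 ltac:(lra)) as [Ds0 _]. destruct (Rs PI ltac:(lra)) as [DsP _].
destruct (Ro 0 ltac:(lra)) as [Do0 _]. destruct (Ro PI ltac:(lra)) as [DoP _].
set (D0 := omega PI - omega 0).
assert (HD0 : D0 <> 0) by (intro E; apply HJ; unfold ang_mom; fold D0; rewrite E; field).
assert (HlimD : filterlim (fun p : R * R => omega (snd p) - omega (fst p)) FF (locally D0)).
{ exact (lim_minus _ _ _ _ (lim_snd omega (cD _ _ DoP)) (lim_fst omega (cD _ _ Do0))). }
set (G0 := 4*ln(D0^2) + g2 sigma PI + g1 sigma 0).
assert (HG : filterlim (fun p : R * R => Gf sigma omega (fst p) (snd p)) FF (locally G0)).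
{ unfold Gf. apply lim_plus; [apply lim_plus|].
  - assert (Hc : continuous (fun u => 4*ln(u^2)) D0).
    { apply cM; [apply cK|]. apply cLn; [apply cSq, continuous_id|].
      rewrite <- Rsqr_pow2. apply Rsqr_pos_lt. exact HD0. }
    exact (lim_cont _ (fun u => 4*ln(u^2)) D0 HlimD Hc).
  - exact (lim_snd (g2 sigma) (g2_cont sigma DsP)).
  - exact (lim_fst (g1 sigma) (g1_cont sigma Ds0)). }
set (If := fun p : R * R => RInt (M_integrand sigma omega) (fst p) (snd p)).
unfold M_value, is_RInt_gen in HM.
assert (Hlim : filterlim If FF (locally M)).
{ intros P HP. specialize (HM P HP). unfold filtermapi in HM. unfold filtermap.
  revert HM. apply filter_imp. intros p [y [Hy Py]]. unfold If.
  rewrite (is_RInt_unique _ _ _ _ Hy). exact Py. }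
assert (Hev : FF (fun p : R * R => is_RInt (M_integrand sigma omega) (fst p) (snd p) (If p))).
{ assert (HT : locally M (fun _ => True)) by apply filter_true.
  specialize (HM _ HT). unfold filtermapi in HM.
  revert HM. apply filter_imp. intros p [y [Hy _]]. unfold If.
  rewrite (is_RInt_unique _ _ _ _ Hy). exact Hy. }
assert (Hbox : FF (fun p : R * R => (0 < fst p < PI/2) /\ (PI/2 < snd p < PI))).
{ assert (Hp : 0 < PI/2) by lra.
  apply (Filter_prod _ _ _ (fun x => 0 < x < PI/2) (fun y => PI/2 < y < PI)).
  - exists (mkposreal _ Hp). intros y Hy Hy0. change (Rabs (y - 0) < PI/2) in Hy.
    apply Rabs_lt_between' in Hy. simpl in *. lra.
  - exists (mkposreal _ Hp). intros y Hy Hy0. change (Rabs (y - PI) < PI/2) in Hy.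
    apply Rabs_lt_between' in Hy. simpl in *. lra.
  - intros x y Hx Hy. simpl. auto. }
assert (HDn : FF (fun p : R * R => omega (snd p) - omega (fst p) <> 0)).
{ apply (HlimD (fun u => u <> 0)). assert (Ha : 0 < Rabs D0) by (apply Rabs_pos_lt; exact HD0).
  exists (mkposreal _ Ha). intros u Hu. change (Rabs (u - D0) < Rabs D0) in Hu.
  intro E. rewrite E in Hu. rewrite Rminus_0_l, Rabs_Ropp in Hu. simpl in Hu. lra. }
assert (HE : FF (fun p : R * R => Gf sigma omega (fst p) (snd p) <= If p)).
{ generalize (filter_and _ _ Hev (filter_and _ _ Hbox HDn)).
  apply filter_imp. intros [al be] [Hi [[Hal Hbe] Hn]]. simpl in *.
  eapply Rle_trans.
  - apply Phi_diff_bound; [lra | lra | exact Hn].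
  - apply interval_bound; auto; lra. }
assert (PF : ProperFilter' FF).
{ apply Proper_StrongProper. apply filter_prod_proper. }
pose proof (filterlim_le (F := FF) _ _ (Finite G0) (Finite M) HE HG Hlim) as Hle.
simpl in Hle.
assert (HG0 : G0 = 8 * (ln (2 * Rabs (ang_mom omega)) + 1)).
{ unfold G0, g1, g2. rewrite cos_PI, cos_0.
  replace (1 - -1) with 2 by ring. replace (1 + 1) with 2 by ring.
  unfold ang_mom. fold D0.
  set (u := 2 * Rabs (D0 / 8)).
  assert (Hu : 0 < u) by (unfold u; apply Rmult_lt_0_compat; [lra| apply Rabs_pos_lt; intro E; apply HD0; lra]).
  assert (Hsq : D0^2 = (u*u)*((2*2)*(2*2))).
  { unfold u. replace (2 * Rabs (D0/8) * (2 * Rabs (D0/8))) with (4 * (Rabs (D0/8))^2) by ring.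
    rewrite pow2_abs. field. }
  rewrite Hsq.
  rewrite ln_mult by (apply Rmult_lt_0_compat; lra).
  rewrite ln_mult by lra. rewrite ln_mult by lra. rewrite ln_mult by lra.
  ring. }
lra.
Qed.
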